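(* Let $n \ge 2$ and let $C = (w_1, w_2, \dots, w_{2^n}, w_1)$ be a Hamiltonian cycle of the $n$-dimensional hypercube on vertex set $\{0,1\}^n$ (i.e. a cyclic Gray code: the $w_k$ are pairwise distinct, and consecutive words $w_k, w_{k+1}$, as well as $w_{2^n}, w_1$, differ in exactly one bit position). Let $f_C:\{0,1\}^n\to\{0,1\}^n$ be the Boolean map defined componentwise by $(f_C)_i(x) = x_i$ if the arc from $x$ to $x$ with bit $i$ flipped is one of the arcs $w_k\to w_{k+1}$ ($1\le k<2^n$) or $w_{2^n}\to w_1$ of $C$, and $(f_C)_i(x) = \overline{x_i}$ otherwise; thus $\Gamma(f_C)$ is the directed $n$-cube with the arcs of $C$ removed (and loops added). Then the iteration graph $\Gamma(f_C)$ is strongly connected.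
   Context: The directed $n$-cube has vertex set $\{0,1\}^n$ and an arc from $x$ to $y$ whenever $x$ and $y$ differ in exactly one bit (in both directions). For a Boolean map $f=(f_1,\dots,f_n):\{0,1\}^n\to\{0,1\}^n$, define $F_f(i,x) = (x_1,\dots,x_{i-1},f_i(x),x_{i+1},\dots,x_n)$ for $i\in\{1,\dots,n\}$. The iteration graph $\Gamma(f)$ is the directed graph with vertex set $\{0,1\}^n$ containing, for every $x$ and every $i$, an arc from $x$ to $F_f(i,x)$. A directed graph is strongly connected if every vertex can be reached from every other vertex by a directed path. *)

(* Defs.v *)
From mathcomp Require Import all_boot.
Set Implicit Arguments. Unset Strict Implicit. Unset Printing Implicit Defensive.

(* Vertices of the n-cube: words x = (x_0,...,x_{n-1}) in {0,1}^n,
   bits indexed by 'I_n (0-based instead of 1-based). *)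
Definition word (n : nat) := {ffun 'I_n -> bool}.

Definition flip n (x : word n) (i : 'I_n) : word n :=
  [ffun j => if j == i then ~~ x j else x j].

Definition differ_one n (x y : word n) : bool :=
  #|[set i | x i != y i]| == 1.

Definition Fupd n (f : word n -> word n) (i : 'I_n) (x : word n) : word n :=
  [ffun j => if j == i then f x i else x j].

Definition Gamma n (f : word n -> word n) : rel (word n) :=
  fun x y => [exists i, y == Fupd f i x].

Definition strongly_connected (T : finType) (e : rel T) : Prop :=
  forall x y : T, connect e x y.

(* w : 'I_(2^n) -> word n (w_1,...,w_{2^n} indexed from 0) is a Hamiltonian
   cycle of the n-cube: pairwise distinct, and w_k, w_{k+1 mod 2^n} differ
   in exactly one bit. *)
Definition gray_cycle n (w : 'I_(2 ^ n) -> word n) : Prop :=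
  injective w /\ forall k : 'I_(2 ^ n), differ_one (w k) (w (ordS k)).

Definition cycle_arc n (w : 'I_(2 ^ n) -> word n) (x : word n) (i : 'I_n) : bool :=
  [exists k : 'I_(2 ^ n), (w k == x) && (w (ordS k) == flip x i)].

Definition fC n (w : 'I_(2 ^ n) -> word n) (x : word n) : word n :=
  [ffun i => if cycle_arc w x i then x i else ~~ x i].

(* Main.v *)
Require Import Defs.
From mathcomp Require Import all_boot.
From mathcomp Require Import zify.

Lemma differ_flip n (x y : word n) : differ_one x y -> exists i, y = flip x i.
Proof.
move=> /cards1P [i Hi]; exists i; apply/ffunP => j; rewrite ffunE.
have H : (x j != y j) = (j == i).
  by have := congr1 (fun A : {set 'I_n} => j \in A) Hi; rewrite /= !inE.
move: H; case: (j == i); case: (x j); case: (y j) => //.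
Qed.

Lemma ordS2_neq m (k : 'I_m) : 4 <= m -> ordS (ordS k) != k.
Proof.
move=> hm; apply/eqP=> /(congr1 val) /=; have := ltn_ord k.
case: (ltnP k.+1 m) => h1 hk.
  rewrite (modn_small h1); case: (ltnP k.+2 m) => h2.
    by rewrite (modn_small h2) => /eqP; rewrite -[k.+2]addn2 -{2}[nat_of_ord k]addn0 eqn_add2l.
  have e : k.+2 = m by apply/eqP; rewrite eqn_leq h2 h1.
  by rewrite e modnn => e0; move: e; rewrite -e0 => e'; rewrite -e' in hm.
have e : k.+1 = m by apply/eqP; rewrite eqn_leq h1 hk.
rewrite e modnn modn_small; last by apply: leq_trans hm.
by move=> e1; move: e; rewrite -e1 => e'; rewrite -e' in hm.
Qed.

Lemma iter_ordS m (k : 'I_m) j : val (iter j (@ordS m) k) = (k + j) %% m.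
Proof.
elim: j => [|j IH] /=; first by rewrite addn0 modn_small.
by rewrite IH /= -addn1 modnDml -addnA addn1.
Qed.

Theorem theorem2 (n : nat) (hn : 2 <= n) (w : 'I_(2 ^ n) -> word n) :
  gray_cycle w -> strongly_connected (Gamma (fC w)).
Proof.
move=> [winj wd].
have h4 : 4 <= 2 ^ n by rewrite (_ : 4 = 2 ^ 2) // leq_exp2l.
have step : forall k, Gamma (fC w) (w (ordS k)) (w k).
  move=> k.
  have [i Hi] : exists i, w k = flip (w (ordS k)) i.
    have d := wd k.
    have [i Hi] : exists i, w (ordS k) = flip (w k) i by exact: differ_flip.
    exists i; rewrite Hi; apply/ffunP => j; rewrite !ffunE.
    by case: eqP => [->|]; rewrite ?eqxx ?negbK.
  have nc : ~~ cycle_arc w (w (ordS k)) i.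
    apply/existsP => -[j /andP [/eqP e1 /eqP e2]].
    have ej := winj _ _ e1; rewrite ej -Hi in e2.
    by move/eqP: (winj _ _ e2); rewrite (negbTE (@ordS2_neq _ k h4)).
  apply/existsP; exists i; rewrite Hi; apply/eqP/ffunP => j; rewrite !ffunE.
  by rewrite (negbTE nc); case: eqP => [->|].
have reach : forall j k, connect (Gamma (fC w)) (w (iter j (@ordS _) k)) (w k).
  elim=> [|j IH] k /=; first exact: connect0.
  exact: connect_trans (connect1 (step _)) (IH k).
move=> x y.
have [k ->] : exists k, y = w k.
  have : y \in codom w.
    apply: inj_card_onto => //; rewrite card_ffun card_bool card_ord card_ord //.
  by move/codomP=> [k ->]; exists k.
have [l ->] : exists l, x = w l.
  have : x \in codom w.
    apply: inj_card_onto => //; rewrite card_ffun card_bool card_ord card_ord //.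
  by move/codomP=> [l ->]; exists l.
have -> : l = iter (l + 2 ^ n - k) (@ordS _) k.
  apply: val_inj; rewrite iter_ordS.
  have hk := ltn_ord k; rewrite addnBA; last by apply: leq_trans (ltnW hk) (leq_addl _ _).
  rewrite addnC addnK modnDr modn_small //.
exact: reach.
Qed.
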